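(* Let $p\ge2$ and $p'$ be coprime positive integers, let $T_m$ denote the $m$-th Chebyshev polynomial of the first kind ($T_m(\cosh\tau)=\cosh(m\tau)$), and let $G^{(2)}_{\mathrm{cl.}}(\zeta,Q)$ be the semiclassical spectral polynomial described below. Then, up to normalisation, $$G^{(2)}_{\mathrm{cl.}}(\zeta,Q)=\begin{cases}\displaystyle\prod_{a=1}^{(p-1)/2}\left(T_p\Big(\frac{Q}{2\cos(\pi p'a/p)}\Big)-T_{p'}\big((-1)^a\zeta\big)\right), & p\text{ odd},\\[2ex] \displaystyle Q^{p/2}\prod_{a=1}^{(p-2)/2}\left(T_p\Big(\frac{Q}{2\cos(\pi p'a/p)}\Big)-T_{p'}\big((-1)^a\zeta\big)\right), & p\text{ even}.\end{cases}$$
   Context: $G^{(2)}_{\mathrm{cl.}}(\zeta,Q)$ is the $g_s\to0$ limit, in the conformal background, of the characteristic polynomial $\det\big(Q\,\mathbb{I}-\mathcal{Q}^{(2)}(t;\zeta)\big)$ of the $\binom p2\times\binom p2$ Lax matrix governing $\partial_\zeta$ of the vector of degree-$2$ generalised Wronskians of solutions of the $(p,p')$ system $\zeta\psi=\mathbb{P}\psi$, $\partial_\zeta\psi=\mathbb{Q}\psi$. Concretely, in this limit it is the polynomial in $Q$ of degree $p(p-1)/2$ whose zeros, for $\zeta=\cosh(p\tau)$, are $Q^{(j_1)}(\tau)+Q^{(j_2)}(\tau)$ for $1\le j_1<j_2\le p$, where $Q^{(j)}(\tau)=\cosh\big[p'(\tau-2\pi\mathrm{i}(j-1)/p)\big]$.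 *)

(* Defs.v *)
From HB Require Import structures.
From mathcomp Require Import all_boot all_order all_algebra.
From mathcomp Require Import all_classical all_reals all_analysis.
From mathcomp Require Import complex.
Set Implicit Arguments. Unset Strict Implicit. Unset Printing Implicit Defensive.
Import Order.TTheory GRing.Theory Num.Theory.
Local Open Scope ring_scope.
Local Open Scope complex_scope.

Fixpoint chebT_pair (K : nzRingType) (n : nat) : {poly K} * {poly K} :=
  (* returns (T_n, T_{n+1}) *)
  match n with
  | 0 => (1, 'X)
  | m.+1 => let: (a, b) := chebT_pair K m in (b, 'X *+ 2 * b - a)
  end.
Definition chebT (K : nzRingType) (n : nat) : {poly K} := (chebT_pair K n).1.

Definition cexp (R : realType) (z : R[i]) : R[i] :=
  (expR (complex.Re z))%:C * (cos (complex.Im z) +i* sin (complex.Im z)).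

Definition ccosh (R : realType) (z : R[i]) : R[i] :=
  (cexp z + cexp (- z)) / 2%:R.

(* Q^{(j)}(tau) = cosh[p' (tau - 2 pi i (j-1)/p)],  j = 1..p;
   here indexed by k = j - 1 : 'I_p. *)
Definition Qj (R : realType) (p p' : nat) (k : nat) (tau : R[i]) : R[i] :=
  ccosh (p'%:R * (tau - (0 +i* (2 * pi * k%:R / p%:R)))).

(* Semiclassical spectral polynomial G^{(2)}_cl evaluated at Q, with
   zeta = cosh(p tau): product over 1 <= j1 < j2 <= p of
   (Q - Q^{(j1)}(tau) - Q^{(j2)}(tau)). *)
Definition G2cl (R : realType) (p p' : nat) (tau Q : R[i]) : R[i] :=
  \prod_(j1 < p) \prod_(j2 < p | (j1 < j2)%N)
     (Q - Qj p p' j1 tau - Qj p p' j2 tau).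

Definition Gfactor (R : realType) (p p' a : nat) (zeta Q : R[i]) : R[i] :=
  (chebT _ p).[Q / (2 * cos (pi * (p' * a)%:R / p%:R))%:C]
  - (chebT _ p').[(-1) ^+ a * zeta].

Definition G2rhs (R : realType) (p p' : nat) (zeta Q : R[i]) : R[i] :=
  if odd p then
    \prod_(1 <= a < (p - 1)./2 + 1) Gfactor p p' a zeta Q
  else
    Q ^+ (p./2) * \prod_(1 <= a < (p - 2)./2 + 1) Gfactor p p' a zeta Q.

(* Main.v *)
Require Import Defs.
From HB Require Import structures.
From mathcomp Require Import all_boot all_order all_algebra.
From mathcomp Require Import all_classical all_reals all_analysis.
From mathcomp Require Import complex.
From mathcomp Require Import ring lra zify.
Import Order.TTheory GRing.Theory Num.Theory.
Local Open Scope ring_scope.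
Local Open Scope complex_scope.
Set Implicit Arguments. Unset Strict Implicit.

Section S.
Variable R : realType.
Notation C := R[i].

Lemma two_neq0 : (2%:R : C) != 0.
Proof. by rewrite pnatr_eq0. Qed.

Lemma chebT_eval (x : C) n : x != 0 ->
  (chebT C n).[(x + x^-1) / 2%:R] = (x ^+ n + x ^- n) / 2%:R.
Proof.
move=> x0.
have H2 := two_neq0.
suff: ((chebT_pair C n).1.[(x + x^-1) / 2%:R] = (x ^+ n + x ^- n) / 2%:R) /\
      ((chebT_pair C n).2.[(x + x^-1) / 2%:R] = (x ^+ n.+1 + x ^- n.+1) / 2%:R).
  by case.
elim: n => [|n [IH1 IH2]].
  rewrite /= hornerC hornerX expr0 expr1 invr1; split; last by [].
  by field.
rewrite /=; move: IH1 IH2; case: (chebT_pair C n) => a b /= IH1 IH2.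
split; first by [].
rewrite hornerD hornerN hornerM hornerMn hornerX IH1 IH2.
have xn0 : x ^+ n != 0 by rewrite expf_neq0.
rewrite !exprS; field.
by rewrite xn0 x0.
Qed.

Lemma cexp0 : cexp (0 : C) = 1.
Proof.
rewrite /cexp /= expR0 cos0 sin0; apply/eqP; rewrite eq_complex /=.
by simpc.
Qed.

Lemma cexpD (z w : C) : cexp (z + w) = cexp z * cexp w.
Proof.
case: z => a b; case: w => c d; rewrite /cexp.
simpc. rewrite /= expRD sinD cosD. simpc.
apply/eqP; rewrite eq_complex /=; apply/andP; split; apply/eqP; ring.
Qed.

Lemma cexp_neq0 (z : C) : cexp z != 0.
Proof.
apply/negP => /eqP h.
have := cexpD z (- z); rewrite subrr cexp0 h mul0r => /eqP.
by rewrite oner_eq0.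
Qed.

Lemma cexpN (z : C) : cexp (- z) = (cexp z)^-1.
Proof.
apply: (mulfI (cexp_neq0 z)); rewrite -cexpD subrr cexp0 mulfV //.
exact: cexp_neq0.
Qed.

Lemma cexpMn (z : C) n : cexp (n%:R * z) = cexp z ^+ n.
Proof.
elim: n => [|n IH]; first by rewrite mul0r cexp0 expr0.
by rewrite -addn1 natrD mulrDl mul1r cexpD IH exprD expr1.
Qed.

Definition ei (t : R) : C := cexp (0 +i* t).

Lemma eiD a b : ei (a + b) = ei a * ei b.
Proof. by rewrite /ei -cexpD; congr cexp; simpc. Qed.

Lemma eiN a : ei (- a) = (ei a)^-1.
Proof. by rewrite /ei -cexpN; congr cexp; simpc. Qed.

Lemma eiMn a n : ei (n%:R * a) = ei a ^+ n.
Proof.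
rewrite /ei -cexpMn; congr cexp.
have -> : (n%:R : C) = (n%:R : R) +i* 0 by rewrite complexr0 rmorph_nat.
by simpc.
Qed.

Lemma ei_cos a : ei a + ei (- a) = (2 * cos a)%:C.
Proof.
rewrite /ei /cexp /= expR0 cosN sinN; apply/eqP; rewrite eq_complex /=; simpc.
by rewrite /= andbT; apply/eqP; ring.
Qed.

Lemma ei_pi : ei pi = -1.
Proof. rewrite /ei /cexp /= expR0 cospi sinpi; apply/eqP; rewrite eq_complex /=; by simpc. Qed.

Lemma ei_2pi : ei (2 * pi) = 1.
Proof. rewrite mulr_natl /ei /cexp /= expR0 cos2pi sin2pi; apply/eqP; rewrite eq_complex /=; by simpc. Qed.

Lemma ei_neq1 t : 0 < t < 2 * pi -> ei t != 1.
Proof.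
move=> /andP[t0 t2]; rewrite /ei /cexp /= expR0 rmorph1 mul1r.
apply/negP; rewrite eq_complex /= => /andP[/eqP hc /eqP hs].
have [tpi|tpi|tpi] := ltgtP t pi.
- by by have := @sin_gt0_pi R t; rewrite hs t0 tpi ltxx /=; move/(_ isT).
- have : 0 < sin (t - pi) by apply: sin_gt0_pi; rewrite subr_gt0 tpi /=; lra.
  by rewrite -(opprK (sin (t - pi))) -sinDpi subrK hs oppr0 ltxx.
- move: hc; rewrite tpi cospi => h; lra.
Qed.

Lemma eta_prim (p : nat) : (0 < p)%N -> p.-primitive_root (ei (2 * pi / p%:R)).
Proof.
move=> p0.
have pn0 : (p%:R : R) != 0 by rewrite pnatr_eq0 -lt0n.
have hp : ei (2 * pi / p%:R) ^+ p = 1.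
  by rewrite -eiMn mulrC divfK // ei_2pi.
have [m pm mp] := prim_order_exists p0 hp.
have m0 := prim_order_gt0 pm.
have mle : (m <= p)%N by apply: dvdn_leq.
case: (ltngtP m p) => [mlt|mgt|meq]; last 1 first.
  by move: pm; rewrite meq.
  2: by move: mgt; rewrite ltnNge mle.
have := prim_expr_order pm; rewrite -eiMn => h.
suff : ei (m%:R * (2 * pi / p%:R)) != 1 by rewrite h eqxx.
apply: ei_neq1.
have pi0 := pi_gt0 R.
have p0R : (0 : R) < p%:R by rewrite ltr0n.
apply/andP; split.
  by rewrite mulr_gt0 ?ltr0n // divr_gt0 // mulr_gt0.
have mlt' : (m%:R : R) < p%:R by rewrite ltr_nat.
rewrite mulrCA -{2}(mulr1 (2 * pi)) ltr_pM2l ?mulr_gt0 //.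
by rewrite ltr_pdivrMr // mul1r.
Qed.

Lemma prod_sub (nu : C) p u v : p.-primitive_root nu ->
  \prod_(0 <= j < p) (u - v * nu ^+ j) = u ^+ p - v ^+ p.
Proof.
move=> pr; have p0 := prim_order_gt0 pr.
have [->|v0] := eqVneq v 0.
  under eq_bigr do rewrite mul0r subr0.
  by rewrite prodr_const_nat subn0 expr0n gtn_eqF // subr0.
have := congr1 (fun P => P.[u / v]) (factor_Xn_sub_1 pr).
rewrite horner_prod hornerD hornerN hornerXn hornerC.
under eq_bigr do rewrite hornerXsubC.
move=> e.
transitivity (\prod_(0 <= j < p) (v * (u / v - nu ^+ j))).
  by apply: eq_bigr => j _; rewrite mulrBr mulrCA divff // mulr1.
rewrite big_split /= prodr_const_nat subn0.
rewrite e mulrBr exprMn mulrCA -exprMn divff // expr1n mulr1 mulr1 //.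
Qed.

Lemma prim_inv (nu : C) p : p.-primitive_root nu -> p.-primitive_root nu^-1.
Proof.
move=> pr; have p0 := prim_order_gt0 pr.
have -> : nu^-1 = nu ^+ p.-1.
  have nu0 : nu != 0 by rewrite (prim_root_eq0 pr) gtn_eqF.
  apply: (mulIf nu0); rewrite mulVf // -exprSr prednK //.
  by rewrite (prim_expr_order pr).
by rewrite (prim_root_exp_coprime _ pr) coprimePn.
Qed.

Lemma half_inv_exists (X : C) : exists x : C, x != 0 /\ X = (x + x^-1) / 2%:R.
Proof.
set s := sqrtc (X ^+ 2 - 1).
have hs : s ^+ 2 = X ^+ 2 - 1 by rewrite sqr_sqrtc.
have h1 : (X + s) * (X - s) = 1.
  have -> : (X + s) * (X - s) = X ^+ 2 - s ^+ 2 by ring.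
  by rewrite hs; ring.
have x0 : X + s != 0.
  by apply/negP => /eqP h; move: h1; rewrite h mul0r => /eqP; rewrite eq_sym oner_eq0.
have hi : (X + s)^-1 = X - s.
  by rewrite -[LHS]mulr1 -h1 mulrA mulVf // mul1r.
exists (X + s); split => //; rewrite hi.
by field.
Qed.

Lemma cheb_prod (nu : C) p y X : p.-primitive_root nu -> y != 0 ->
  \prod_(0 <= j < p) (X - (y * nu ^+ j + (y * nu ^+ j)^-1) / 2%:R)
  = ((chebT C p).[X] - (y ^+ p + y ^- p) / 2%:R) * 2%:R / 2%:R ^+ p.
Proof.
move=> pr y0.
have nu0 : nu != 0 by rewrite (prim_root_eq0 pr) gtn_eqF // (prim_order_gt0 pr).
have [x [x0 ->]] := half_inv_exists X.
have t := two_neq0.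
rewrite chebT_eval //.
transitivity (\prod_(0 <= j < p)
   ((x - y * nu ^+ j) * (x - y^-1 * nu^-1 ^+ j) * (2%:R * x)^-1)).
  apply: eq_bigr => j _.
  have a0 : y * nu ^+ j != 0 by rewrite mulf_neq0 // expf_neq0.
  rewrite exprVn -invfM.
  move: a0; set a := y * nu ^+ j => a0.
  by field; rewrite a0 x0.
rewrite (big_split _ _ _ (fun j => (x - y * nu ^+ j) * (x - y^-1 * nu^-1 ^+ j)) (fun j => (2%:R * x)^-1)) /=.
rewrite big_split /= prod_sub // prod_sub ?prim_inv // prodr_const_nat subn0.
have xp0 : x ^+ p != 0 by rewrite expf_neq0.
have yp0 : y ^+ p != 0 by rewrite expf_neq0.
have tp0 : (2%:R : C) ^+ p != 0 by rewrite expf_neq0.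
rewrite !exprVn exprMn.
move: xp0 yp0 tp0; set A := x ^+ p; set B := y ^+ p; set T := (2%:R : C) ^+ p.
move=> xp0 yp0 tp0.
by field; rewrite xp0 yp0 tp0.
Qed.

Definition qq (w nu : C) k := (w * nu ^+ k + (w * nu ^+ k)^-1) / 2%:R.

Lemma pair_prod (nu mu w Q : C) p d : p.-primitive_root nu -> w != 0 ->
  mu ^+ 2 = nu -> mu ^+ d + mu ^- d != 0 ->
  \prod_(0 <= j < p) (Q - qq w nu j - qq w nu (j + d)) =
  (mu ^+ d + mu ^- d) ^+ p *
  (((chebT C p).[Q / (mu ^+ d + mu ^- d)] -
    ((w * mu ^+ d) ^+ p + (w * mu ^+ d) ^- p) / 2%:R) * 2%:R / 2%:R ^+ p).
Proof.
move=> pr w0 hmu C0.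
have nu0 : nu != 0 by rewrite (prim_root_eq0 pr) gtn_eqF // (prim_order_gt0 pr).
have mu0 : mu != 0 by apply: contra nu0 => /eqP m0; rewrite -hmu m0 expr0n.
rewrite -(@cheb_prod nu p (w * mu ^+ d) (Q / (mu ^+ d + mu ^- d)) pr); last by rewrite mulf_neq0 // expf_neq0.
rewrite -[p in (_ + _) ^+ p]subn0 -prodr_const_nat -big_split /=.
apply: eq_bigr => j _.
rewrite /qq exprD.
have -> : nu ^+ d = (mu ^+ d) ^+ 2 by rewrite -hmu -!exprM mulnC.
have Nj : nu ^+ j != 0 by rewrite expf_neq0.
have Md : mu ^+ d != 0 by rewrite expf_neq0.
move: C0 Nj Md.
set N := nu ^+ j; set M := mu ^+ d; move=> C0 Nj Md.
have E : M * M + 1 = (M + M^-1) * M by field.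
by field; rewrite E Nj Md w0 mulf_neq0.
Qed.
End S.

Section Comb.
Variable K : comNzRingType.

Lemma tri_nat (f : nat -> nat -> K) n :
  \prod_(0 <= i < n) \prod_(i.+1 <= j < n) f i j =
  \prod_(1 <= d < n) \prod_(0 <= i < n - d) f i (i + d).
Proof.
elim: n => [|n IH]; first by rewrite !big_geq.
rewrite big_nat_recr //= [in X in _ * X]big_geq // mulr1.
under eq_big_nat => i /andP[_ hi] do rewrite big_nat_recr //.
rewrite big_split /= IH.
case: n IH => [|n] IH; first by rewrite !big_geq // mulr1.
rewrite [in RHS]big_nat_recr //=.
rewrite [in RHS](eq_big_nat _ _ (F2 := fun d =>
   (\prod_(0 <= i < n.+1 - d) f i (i + d)) * f (n.+1 - d)%N (n.+1))); last first.
  move=> d /andP[h1 h2]; rewrite (_ : (n.+2 - d = (n.+1 - d).+1)%N); last lia.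
  rewrite big_nat_recr //=; congr (_ * _); congr f; lia.
rewrite big_split /= subSS subSnn big_nat1 -mulrA.
congr (_ * _).
rewrite big_nat_recl // mulrC; congr (_ * _).
rewrite (big_nat_rev _ _ 1) /= big_add1 /=.
apply: eq_big_nat => i /andP[_ hi]; congr f; lia.
Qed.

Lemma fold_odd (h : nat -> K) m :
  \prod_(0 <= i < 2 * m) h i = \prod_(0 <= i < m) (h i * h (2 * m - 1 - i)%N).
Proof.
elim: m h => [|m IH] h; first by rewrite !big_geq.
rewrite (_ : (2 * m.+1 = (2 * m).+1.+1)%N); last lia.
rewrite big_nat_recr // big_nat_recl // IH big_nat_recl //.
have E : \prod_(0 <= i < m) (h i.+1 * h (2 * m - 1 - i).+1) =
  \prod_(0 <= i < m) (h i.+1 * h ((2 * m).+2 - 1 - i.+1)%N).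
  by apply: eq_big_nat => i /andP[_ hi]; congr (_ * h _); lia.
rewrite E (_ : ((2 * m).+2 - 1 - 0 = (2 * m).+1)%N); last lia.
rewrite /=; ring.
Qed.

Lemma fold_even (h : nat -> K) m :
  \prod_(0 <= i < (2 * m).+1) h i =
  (\prod_(0 <= i < m) (h i * h (2 * m - i)%N)) * h m.
Proof.
elim: m h => [|m IH] h; first by rewrite big_nat1 big_geq // mul1r.
rewrite (_ : ((2 * m.+1).+1 = (2 * m).+1.+1.+1)%N); last lia.
rewrite big_nat_recr // big_nat_recl // IH big_nat_recl //.
have E : \prod_(0 <= i < m) (h i.+1 * h (2 * m - i).+1) =
  \prod_(0 <= i < m) (h i.+1 * h (2 * m.+1 - i.+1)%N).
  by apply: eq_big_nat => i /andP[_ hi]; congr (_ * h _); lia.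
rewrite E (_ : (2 * m.+1 - 0 = (2 * m).+2)%N); last lia.
rewrite /=; ring.
Qed.

Lemma ord_tri (f : nat -> nat -> K) n :
  \prod_(i < n) \prod_(j < n | (i < j)%N) f i j =
  \prod_(0 <= i < n) \prod_(i.+1 <= j < n) f i j.
Proof.
rewrite -(big_mkord xpredT (fun i => \prod_(j < n | (i < j)%N) f i j)).
apply: eq_big_nat => i /andP[_ hi].
rewrite -(big_mkord (fun j => (i < j)%N) (f i)) (big_cat_nat _ (n := i.+1)) //=.
rewrite big1_seq ?mul1r; last first.
  move=> j /andP[hj]; rewrite mem_index_iota => /andP[_ hj2].
  by move: hj; rewrite ltnNge -ltnS hj2.
rewrite big_nat_cond [RHS]big_nat_cond; apply: eq_bigl => j.
by case/boolP: (i.+1 <= j < n)%N => //= /andP[-> _].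
Qed.
End Comb.

Section S2.
Variable R : realType.
Notation C := R[i].

Definition eta p : C := ei (2 * pi / p%:R).
Definition nuF p p' : C := (eta p)^-1 ^+ p'.
Definition muF p p' : C := (ei (pi / p%:R : R))^-1 ^+ p'.

Lemma eiE (t : R) : cexp (0 +i* t) = ei t. Proof. by []. Qed.

Lemma Qj_eq p p' k (tau : C) : Qj p p' k tau = qq (cexp tau ^+ p') (nuF p p') k.
Proof.
rewrite /Qj /ccosh /qq cexpN cexpMn cexpD cexpN eiE.
have -> : 2 * (pi : R) * k%:R / p%:R = k%:R * (2 * pi / p%:R) by ring.
rewrite eiMn -/(eta p) /nuF.
have -> : (cexp tau / eta p ^+ k) ^+ p' = cexp tau ^+ p' * (eta p)^-1 ^+ p' ^+ k.
  rewrite exprMn -exprVn -!exprM mulnC; reflexivity.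
reflexivity.
Qed.

Lemma nu_prim p p' : (0 < p)%N -> coprime p p' -> p.-primitive_root (nuF p p').
Proof.
move=> p0 cop; rewrite /nuF.
rewrite prim_root_exp_coprime.
rewrite coprime_sym //.
exact/prim_inv/eta_prim.
Qed.

Lemma mu2 p p' : muF p p' ^+ 2 = nuF p p'.
Proof.
rewrite /muF /nuF /eta -exprM mulnC exprM.
have E : (ei (pi / p%:R : R))^-1 ^+ 2 = (ei (2 * pi / p%:R : R))^-1.
  by rewrite exprVn -eiMn mulrA.
rewrite E; reflexivity.
Qed.

Lemma mu_cos p p' d : muF p p' ^+ d + muF p p' ^- d =
   (2 * cos (pi * (p' * d)%:R / p%:R))%:C.
Proof.
rewrite /muF -exprM exprVn -eiMn invrK -ei_cos addrC -eiN.
have -> : ((p' * d)%:R * (pi / p%:R) : R) = pi * (p' * d)%:R / p%:R by ring.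
reflexivity.
Qed.

Lemma ei_neq0 t : ei t != 0 :> C. Proof. exact: cexp_neq0. Qed.

Lemma mu_neq0 p p' : muF p p' != 0.
Proof. by rewrite /muF expf_neq0 // invr_eq0 ei_neq0. Qed.

Lemma Cd_neq0 p p' d : (0 < p)%N -> coprime p p' -> (0 < d)%N -> (2 * d < p)%N ->
  muF p p' ^+ d + muF p p' ^- d != 0.
Proof.
move=> p0 cop d0 dp; apply/negP => /eqP h.
have pr := nu_prim p0 cop.
have M0 : muF p p' ^+ d != 0 by rewrite expf_neq0 // mu_neq0.
move: h M0; set M := muF p p' ^+ d => h M0.
have hM : M ^+ 2 = -1.
  have : M * (M + M^-1) = 0 by rewrite h mulr0.
  rewrite mulrDr mulfV // => /eqP; rewrite addr_eq0 => /eqP <-.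
  by rewrite expr2.
have : nuF p p' ^+ (d * 2) = 1.
  have E : nuF p p' ^+ d = M ^+ 2.
    rewrite /M -mu2 -!exprM (mulnC 2 d); reflexivity.
  by rewrite exprM E hM sqrrN expr1n.
move/eqP; rewrite -(prim_order_dvd pr) => /dvdn_leq.
have : (0 < d * 2)%N by lia.
move=> h1 /(_ h1); lia.
Qed.

Lemma nu_half p p' m : p = (2 * m).+2 -> coprime p p' -> nuF p p' ^+ m.+1 = -1.
Proof.
move=> hp cop.
have pr := nu_prim (ltac:(lia) : (0 < p)%N) cop.
have : (nuF p p' ^+ m.+1) ^+ 2 == 1.
  by rewrite -exprM (_ : (m.+1 * 2 = p)%N); [rewrite (prim_expr_order pr) | lia].
rewrite sqrf_eq1 => /orP[|/eqP //].
rewrite -(prim_order_dvd pr) => /dvdn_leq; lia.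
Qed.

Definition ff (w nu Q : C) a b := Q - qq w nu a - qq w nu b.

Lemma qq_per (w nu : C) p a : p.-primitive_root nu -> qq w nu (a + p) = qq w nu a.
Proof. by move=> pr; rewrite /qq exprD (prim_expr_order pr) mulr1. Qed.

Lemma GG (w nu Q : C) p d : p.-primitive_root nu -> (d <= p)%N ->
  \prod_(0 <= i < p - d) ff w nu Q i (i + d) *
  \prod_(0 <= i < p - (p - d)) ff w nu Q i (i + (p - d)) =
  \prod_(0 <= j < p) ff w nu Q j (j + d).
Proof.
move=> pr dp.
rewrite (subKn dp) [RHS](big_cat_nat _ (n := (p - d)%N)) ?leq_subr //=.
congr (_ * _).
rewrite -[in RHS](add0n (p - d)%N) big_addn (subKn dp).
apply: eq_big_nat => i _.
rewrite /ff (_ : (i + (p - d) + d = i + p)%N); last lia.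
rewrite (qq_per w i pr) [RHS]addrAC; reflexivity.
Qed.

Lemma ccosh_eq (z : C) : ccosh z = (cexp z + (cexp z)^-1) / 2%:R.
Proof. by rewrite /ccosh cexpN. Qed.

Lemma mu_pow_p p p' : (0 < p)%N -> muF p p' ^+ p = (-1) ^+ p'.
Proof.
move=> p0; rewrite /muF -exprM mulnC exprM exprVn -eiMn.
have -> : (p%:R * (pi / p%:R) : R) = pi.
  by rewrite mulrC divfK // pnatr_eq0 -lt0n.
by rewrite ei_pi invrN1.
Qed.

Lemma Tside p p' d (tau : C) : (0 < p)%N ->
  ((cexp tau ^+ p' * muF p p' ^+ d) ^+ p + (cexp tau ^+ p' * muF p p' ^+ d) ^- p) / 2%:R
  = (chebT C p').[(-1) ^+ d * ccosh (p%:R * tau)].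
Proof.
move=> p0.
set u := (-1) ^+ d * cexp tau ^+ p.
have u0 : u != 0 by rewrite mulf_neq0 // expf_neq0 // ?oppr_eq0 ?oner_eq0 // cexp_neq0.
have E : (cexp tau ^+ p' * muF p p' ^+ d) ^+ p = u ^+ p'.
  rewrite /u; move: (cexp tau) (mu_pow_p p' p0); move: (muF p p') => M a hM.
  rewrite exprMn -(exprM M d p) (mulnC d p) exprM hM.
  rewrite exprMn -!exprM mulrC (mulnC p' d) (mulnC p' p); reflexivity.
have E2 : (-1) ^+ d * ccosh (p%:R * tau) = (u + u^-1) / 2%:R.
  rewrite ccosh_eq cexpMn /u; move: (cexp tau ^+ p) => v.
  rewrite invfM -exprVn invrN1; ring.
rewrite E E2 (chebT_eval p' u0); reflexivity.
Qed.

Definition kd p p' d : C := (muF p p' ^+ d + muF p p' ^- d) ^+ p * 2%:R / 2%:R ^+ p.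

Lemma kd_neq0 p p' d : (0 < p)%N -> coprime p p' -> (0 < d)%N -> (2 * d < p)%N ->
  kd p p' d != 0.
Proof.
move=> p0 cop d0 dp; rewrite /kd.
by rewrite !mulf_neq0 ?invr_eq0 ?expf_neq0 ?two_neq0 ?(Cd_neq0 p0 cop d0 dp).
Qed.

Lemma HF p p' d (tau Q : C) : (0 < p)%N -> coprime p p' -> (0 < d)%N -> (2 * d < p)%N ->
  \prod_(0 <= j < p) ff (cexp tau ^+ p') (nuF p p') Q j (j + d) =
  kd p p' d * Gfactor p p' d (ccosh (p%:R * tau)) Q.
Proof.
move=> p0 cop d0 dp.
have w0 : cexp tau ^+ p' != 0 by rewrite expf_neq0 // cexp_neq0.
rewrite /ff (@pair_prod R _ _ _ Q _ _ (nu_prim p0 cop) w0 (mu2 p p') (Cd_neq0 p0 cop d0 dp)).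
rewrite /Gfactor -mu_cos -(Tside p' d tau p0) /kd.
ring.
Qed.

Lemma Gmid p p' m (w Q : C) : p = (2 * m).+2 -> coprime p p' ->
  \prod_(0 <= i < p - m.+1) ff w (nuF p p') Q i (i + m.+1) = Q ^+ m.+1.
Proof.
move=> hp cop.
rewrite (_ : (p - m.+1 = m.+1)%N); last lia.
rewrite -[in RHS](subn0 m.+1) -prodr_const_nat.
apply: eq_big_nat => i _.
rewrite /ff /qq exprD (nu_half hp cop) mulrN1 mulrN invrN.
move: (w * nuF p p' ^+ i) => a.
ring.
Qed.
End S2.

Unset Implicit Arguments.

Theorem proposition5p3p1 (R : realType) (p p' : nat) :
  (2 <= p)%N -> (0 < p')%N -> coprime p p' ->
  exists c : R[i], c != 0 /\
    forall tau Q : R[i],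
      G2cl p p' tau Q = c * G2rhs p p' (ccosh (p%:R * tau)) Q.
Proof.
move=> p2 p'0 cop.
have p0 : (0 < p)%N by lia.
pose G (tau Q : R[i]) d := \prod_(0 <= i < p - d) ff (cexp tau ^+ p') (nuF R p p') Q i (i + d).
have E1 : forall tau Q, G2cl p p' tau Q = \prod_(1 <= d < p) G tau Q d.
  move=> tau Q; rewrite /G -tri_nat -ord_tri /G2cl.
  apply: eq_bigr => i _; apply: eq_bigr => j _.
  rewrite /ff !Qj_eq; reflexivity.
have E2 : forall tau Q d, (d <= p)%N -> G tau Q d * G tau Q (p - d)%N =
     \prod_(0 <= j < p) ff (cexp tau ^+ p') (nuF R p p') Q j (j + d).
  by move=> tau Q d dp; rewrite /G GG // nu_prim.
have hodp := odd_double_half p.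
case/boolP: (odd p) => hodd.
-
  rewrite hodd /= in hodp.
  set m := p./2 in hodp.
  have hm : p = (2 * m).+1 by lia.
  have m1 : (0 < m)%N by lia.
  exists (\prod_(0 <= i < m) kd R p p' i.+1); split.
    rewrite prodf_seq_neq0; apply/allP => i; rewrite mem_index_iota => /andP[_ hi].
    apply/implyP => _; apply: kd_neq0 => //; lia.
  move=> tau Q.
  rewrite E1 /G2rhs hodd.
  have -> : ((p - 1)./2 + 1 = m.+1)%N by rewrite (_ : (p - 1 = m.*2)%N) ?doubleK ?addn1 //; lia.
  have -> : \prod_(1 <= d < p) G tau Q d = \prod_(1 <= d < (2 * m).+1) G tau Q d.
    by rewrite -hm.
  rewrite big_add1 /= fold_odd big_add1 /= -big_split /=.
  apply: eq_big_nat => i /andP[_ hi].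
  rewrite (_ : ((2 * m - 1 - i).+1 = p - i.+1)%N); last lia.
  rewrite E2; last lia.
  rewrite HF; [reflexivity | exact: p0 | exact: cop | lia | lia].
-
  rewrite (negbTE hodd) /= in hodp.
  set m1 := p./2 in hodp.
  have [m hm] : exists m, p = (2 * m).+2 by exists m1.-1; lia.
  have hm1 : m1 = m.+1 by lia.
  exists (\prod_(0 <= i < m) kd R p p' i.+1); split.
    rewrite prodf_seq_neq0; apply/allP => i; rewrite mem_index_iota => /andP[_ hi].
    apply/implyP => _; apply: kd_neq0 => //; lia.
  move=> tau Q.
  rewrite E1 /G2rhs (negbTE hodd) -/m1 hm1.
  have -> : ((p - 2)./2 + 1 = m.+1)%N by rewrite (_ : (p - 2 = m.*2)%N) ?doubleK ?addn1 //; lia.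
  have -> : \prod_(1 <= d < p) G tau Q d = \prod_(1 <= d < (2 * m).+2) G tau Q d.
    by rewrite -hm.
  rewrite big_add1 /= fold_even big_add1 /= /G (Gmid _ _ hm cop) -/G.
  rewrite mulrCA mulrC; congr (_ * _).
  rewrite -big_split /=.
  apply: eq_big_nat => i /andP[_ hi].
  rewrite (_ : ((2 * m - i).+1 = p - i.+1)%N); last lia.
  rewrite E2; last lia.
  rewrite HF; [reflexivity | exact: p0 | exact: cop | lia | lia].
Qed.
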